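(* The word problem for the Manturov group $G^2_3=\langle a,b,c\mid a^2=b^2=c^2=1,\ bca=acb,\ cab=bac,\ cba=abc\rangle$ is solvable.
   Context: $G^2_3$ is the Manturov $(2,3)$-group, with generators $a=a_{12}$, $b=a_{13}$, $c=a_{23}$; each generator is an involution, so every element is represented by a positive word in $a,b,c$. *)

(* Defs.v *)
From Stdlib Require Import List Arith Relations.
Import ListNotations.

Inductive gen : Type := ga | gb | gc.   (* a = a_12, b = a_13, c = a_23 *)

Definition word := list gen.

Definition relators : list (word * word) :=
  [ ([ga; ga], []);
    ([gb; gb], []);
    ([gc; gc], []);
    ([gb; gc; ga], [ga; gc; gb]);
    ([gc; ga; gb], [gb; ga; gc]);
    ([gc; gb; ga], [ga; gb; gc]) ].

Definition step (u v : word) : Prop :=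
  exists p q l r, In (l, r) relators /\ u = p ++ l ++ q /\ v = p ++ r ++ q.

(** Since every generator is
    an involution, the group is the monoid presented by these relations, and
    every element is represented by a positive word. *)
Definition word_eq : word -> word -> Prop := clos_refl_sym_trans word step.

Definition word_trivial (w : word) : Prop := word_eq w [].

Inductive code : Type :=
| Zero : code
| Succ : code
| Proj : nat -> code
| Comp : code -> list code -> code
| Prec : code -> code -> code
| Mu   : code -> code.

Inductive eval : code -> list nat -> nat -> Prop :=
| ev_zero xs : eval Zero xs 0
| ev_succ x : eval Succ [x] (S x)
| ev_proj i xs : i < length xs -> eval (Proj i) xs (nth i xs 0)
| ev_comp f gs xs ys y :
    evals gs xs ys -> eval f ys y -> eval (Comp f gs) xs y
| ev_prec0 f g xs y : eval f xs y -> eval (Prec f g) (0 :: xs) y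
| ev_precS f g n xs z y :
    eval (Prec f g) (n :: xs) z -> eval g (n :: z :: xs) y ->
    eval (Prec f g) (S n :: xs) y
| ev_mu f xs n :
    eval f (n :: xs) 0 ->
    (forall m, m < n -> exists k, eval f (m :: xs) (S k)) ->
    eval (Mu f) xs n
with evals : list code -> list nat -> list nat -> Prop :=
| evs_nil xs : evals [] xs []
| evs_cons g gs xs y ys :
    eval g xs y -> evals gs xs ys -> evals (g :: gs) xs (y :: ys).

(** Injective Goedel encoding of words as natural numbers (bijective base 3). *)
Definition gen_code (x : gen) : nat :=
  match x with ga => 1 | gb => 2 | gc => 3 end.

Fixpoint enc (w : word) : nat :=
  match w with
  | [] => 0
  | x :: w' => gen_code x + 3 * enc w'
  end.

(* Main.v *)
Require Import Defs.
From Stdlib Require Import List Arith Relations ZArith Lia Setoid Morphisms Bool.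
Import ListNotations.

Instance weq_equiv : Equivalence word_eq.
Proof. split; [intro; apply rst_refl | intros ??; apply rst_sym | intros ???; apply rst_trans]. Qed.

Lemma weq_ctx p q u v : word_eq u v -> word_eq (p ++ u ++ q) (p ++ v ++ q).
Proof.
  induction 1.
  - destruct H as [p0 [q0 [l [r [Hin [-> ->]]]]]]. apply rst_step.
    exists (p ++ p0), (q0 ++ q), l, r. split; [exact Hin|]. split; rewrite <- !app_assoc; reflexivity.
  - reflexivity.
  - symmetry; auto.
  - etransitivity; eauto.
Qed.

Instance app_proper : Proper (word_eq ==> word_eq ==> word_eq) (@app gen).
Proof.
  intros u u' Hu v v' Hv. transitivity (u' ++ v).
  - pose proof (weq_ctx [] v u u' Hu). simpl in H. exact H.
  - pose proof (weq_ctx u' [] v v' Hv). rewrite !app_nil_r in H. exact H.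
Qed.

Instance cons_proper : Proper (eq ==> word_eq ==> word_eq) (@cons gen).
Proof. intros x y -> u v H. change (word_eq ([y] ++ u) ([y] ++ v)). rewrite H. reflexivity. Qed.

Lemma rel_step l r q : In (l, r) relators -> word_eq (l ++ q) (r ++ q).
Proof. intro H. apply rst_step. exists [], q, l, r. auto. Qed.

Lemma canc x r : word_eq (x :: x :: r) r.
Proof. destruct x; apply (rel_step [_;_] [] r); simpl; tauto. Qed.
Lemma r1 r : word_eq (gb :: gc :: ga :: r) (ga :: gc :: gb :: r).
Proof. apply (rel_step [_;_;_] [_;_;_] r); simpl; tauto. Qed.
Lemma r2 r : word_eq (gc :: ga :: gb :: r) (gb :: ga :: gc :: r).
Proof. apply (rel_step [_;_;_] [_;_;_] r); simpl; tauto. Qed.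
Lemma r3 r : word_eq (gc :: gb :: ga :: r) (ga :: gb :: gc :: r).
Proof. apply (rel_step [_;_;_] [_;_;_] r); simpl; tauto. Qed.

Fixpoint rep (n : nat) (P : word) : word := match n with 0 => [] | S n => P ++ rep n P end.
Definition pw (P Q : word) (m : Z) : word :=
  if (0 <=? m)%Z then rep (Z.to_nat m) P else rep (Z.to_nat (- m)) Q.

Lemma pw_pos P Q n : pw P Q (Z.of_nat n) = rep n P.
Proof. unfold pw. replace (0 <=? Z.of_nat n)%Z with true by (symmetry; apply Z.leb_le; lia). now rewrite Nat2Z.id. Qed.
Lemma pw_neg P Q n : pw P Q (- Z.of_nat (S n)) = rep (S n) Q.
Proof. unfold pw. replace (0 <=? - Z.of_nat (S n))%Z with false by (symmetry; apply Z.leb_gt; lia).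
  now rewrite Z.opp_involutive, Nat2Z.id. Qed.

Lemma Zcases (m : Z) : (exists n, m = Z.of_nat n) \/ (exists n, m = - Z.of_nat (S n))%Z.
Proof. destruct (Z_le_gt_dec 0 m). left; exists (Z.to_nat m); lia. right; exists (Z.to_nat (- m - 1)); lia. Qed.

Lemma pw_sym P Q m : pw P Q (- m) = pw Q P m.
Proof.
  destruct (Zcases m) as [[n ->]|[n ->]].
  - destruct n. reflexivity. change (Z.of_nat (S n)) with (Z.of_nat (S n)). rewrite pw_neg, pw_pos. reflexivity.
  - rewrite Z.opp_involutive, pw_pos, pw_neg. reflexivity.
Qed.

Lemma pw_P P Q : word_eq (P ++ Q) [] -> forall m, word_eq (P ++ pw P Q m) (pw P Q (m + 1)).
Proof.
  intros PQ m. destruct (Zcases m) as [[n ->]|[n ->]].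
  - replace (Z.of_nat n + 1)%Z with (Z.of_nat (S n)) by lia. rewrite !pw_pos. reflexivity.
  - replace (- Z.of_nat (S n) + 1)%Z with (- Z.of_nat n)%Z by lia. rewrite pw_neg. simpl.
    rewrite app_assoc, PQ. simpl. destruct n. reflexivity. rewrite pw_neg. reflexivity.
Qed.

Lemma pw_Q P Q : word_eq (Q ++ P) [] -> forall m, word_eq (Q ++ pw P Q m) (pw P Q (m - 1)).
Proof.
  intros QP m. rewrite <- (Z.opp_involutive m), pw_sym, pw_P by exact QP.
  rewrite <- pw_sym. f_equiv. f_equal. lia.
Qed.

Lemma rep_conj x P P' : (forall r, word_eq (x ++ P ++ r) (P' ++ x ++ r)) ->
  forall n r, word_eq (x ++ rep n P ++ r) (rep n P' ++ x ++ r).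
Proof.
  intros H n; induction n; intro r; simpl. reflexivity.
  rewrite <- !app_assoc, H, IHn. reflexivity.
Qed.

Lemma pw_conj x P Q : (forall r, word_eq (x ++ P ++ r) (Q ++ x ++ r)) ->
  (forall r, word_eq (x ++ Q ++ r) (P ++ x ++ r)) ->
  forall m r, word_eq (x ++ pw P Q m ++ r) (pw P Q (- m) ++ x ++ r).
Proof.
  intros H1 H2 m r. destruct (Zcases m) as [[n ->]|[n ->]].
  - rewrite pw_pos. destruct n. simpl. reflexivity. rewrite pw_neg. apply rep_conj; auto.
  - rewrite Z.opp_involutive, pw_pos, pw_neg. apply rep_conj; auto.
Qed.

Lemma pw_comm x P Q : (forall r, word_eq (x ++ P ++ r) (P ++ x ++ r)) ->
  (forall r, word_eq (x ++ Q ++ r) (Q ++ x ++ r)) ->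
  forall m r, word_eq (x ++ pw P Q m ++ r) (pw P Q m ++ x ++ r).
Proof.
  intros H1 H2 m r. destruct (Zcases m) as [[n ->]|[n ->]].
  - rewrite pw_pos. apply rep_conj; auto.
  - rewrite pw_neg. apply rep_conj; auto.
Qed.

Notation U := [ga; gb] (only parsing). Notation Ui := [gb; ga] (only parsing).
Notation V := [gb; gc] (only parsing). Notation Vi := [gc; gb] (only parsing).
Definition tl_of (s : bool) : word := if s then [ga] else [].
Definition C (d : bool * Z * Z) : word :=
  let '(s, m, n) := d in pw U Ui m ++ pw V Vi n ++ tl_of s.

Definition act (x : gen) (d : bool * Z * Z) : bool * Z * Z :=
  let '(s, m, n) := d in
  match x with
  | ga => (negb s, - m, - n)
  | gb => (negb s, - m - 1, - n)
  | gc => (negb s, - m - 1, - n - 1)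
  end%Z.

Definition f (w : word) := fold_right act (false, 0%Z, 0%Z) w.

Lemma UUi : word_eq (U ++ Ui) []. Proof. simpl. rewrite canc, canc. reflexivity. Qed.
Lemma UiU : word_eq (Ui ++ U) []. Proof. simpl. rewrite canc, canc. reflexivity. Qed.
Lemma VVi : word_eq (V ++ Vi) []. Proof. simpl. rewrite canc, canc. reflexivity. Qed.
Lemma ViV : word_eq (Vi ++ V) []. Proof. simpl. rewrite canc, canc. reflexivity. Qed.

Lemma a_conj_U m r : word_eq ([ga] ++ pw U Ui m ++ r) (pw U Ui (- m) ++ [ga] ++ r).
Proof. apply pw_conj; intro r0; simpl. rewrite canc. rewrite (canc ga). reflexivity. reflexivity. Qed.
Lemma a_conj_V m r : word_eq ([ga] ++ pw V Vi m ++ r) (pw V Vi (- m) ++ [ga] ++ r).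
Proof. apply pw_conj; intro r0; simpl. rewrite r3. reflexivity. rewrite r1. reflexivity. Qed.
Lemma Vi_comm_U m r : word_eq (Vi ++ pw U Ui m ++ r) (pw U Ui m ++ Vi ++ r).
Proof. apply pw_comm; intro r0; simpl. rewrite r3. reflexivity.
  rewrite canc. rewrite <- r2, canc. reflexivity. Qed.

Lemma a_tl s : word_eq (ga :: tl_of s) (tl_of (negb s)).
Proof. destruct s; simpl. apply (canc ga []). reflexivity. Qed.

Lemma C_act x d : word_eq (x :: C d) (C (act x d)).
Proof.
  destruct d as [[s m] n]. unfold C, act.
  assert (Ha : word_eq (ga :: pw U Ui m ++ pw V Vi n ++ tl_of s)
                       (pw U Ui (- m) ++ pw V Vi (- n) ++ tl_of (negb s))).
  { change (ga :: ?r) with ([ga] ++ r). rewrite a_conj_U, a_conj_V. simpl. rewrite a_tl. reflexivity. }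
  destruct x.
  - exact Ha.
  - rewrite <- (canc ga (pw U Ui m ++ _)). change (gb :: ga :: ?r) with (Ui ++ r).
    rewrite Ha, app_assoc, pw_Q by exact UiU. reflexivity.
  - rewrite <- (canc ga (pw U Ui m ++ _)), <- (canc gb (ga :: _)).
    change (gc :: gb :: gb :: ga :: ?r) with (Vi ++ Ui ++ r).
    rewrite Ha, (app_assoc [gb;ga] (pw _ _ (- m))), pw_Q by exact UiU.
    rewrite Vi_comm_U, (app_assoc [gc;gb] (pw _ _ (- n))), pw_Q by exact ViV. reflexivity.
Qed.

Lemma w_C w : word_eq w (C (f w)).
Proof. induction w; simpl. reflexivity. rewrite IHw at 1. apply C_act. Qed.

Lemma f_app p u : f (p ++ u) = fold_right act (f u) p.
Proof. unfold f. apply fold_right_app. Qed.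

Lemma f_step u v : step u v -> f u = f v.
Proof.
  intros [p [q [l [r [Hin [-> ->]]]]]]. rewrite !f_app. f_equal.
  destruct (f q) as [[s m] n].
  simpl in Hin; repeat destruct Hin as [Hin|Hin]; try contradiction; inversion Hin; subst; simpl;
  rewrite ?negb_involutive; f_equal; f_equal; lia.
Qed.

Lemma triv_iff w : word_trivial w <-> f w = (false, 0%Z, 0%Z).
Proof.
  split.
  - intro H. change (false,0%Z,0%Z) with (f []).
    induction H; auto. apply f_step in H; auto. congruence.
  - intro H. unfold word_trivial. rewrite w_C, H. reflexivity.
Qed.

Fixpoint cnt (d p : nat) (w : word) : nat :=
  match w with
  | [] => 0
  | x :: w' => (if gen_code x =? d then (if p =? 0 then 1 else 0) else 0) + cnt d (1 - p) w'
  end.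

Definition Dz d w : Z := (Z.of_nat (cnt d 0 w) - Z.of_nat (cnt d 1 w))%Z.

Lemma Dz_cons d x w : Dz d (x :: w) = ((if Nat.eqb (gen_code x) d then 1 else 0) - Dz d w)%Z.
Proof. unfold Dz. cbn [cnt]. change (1-0) with 1. change (1-1) with 0. cbn [Nat.eqb]. destruct (Nat.eqb (gen_code x) d); lia. Qed.

Lemma f_cnt w : f w = (((Dz 1 w + Dz 2 w + Dz 3 w) =? 1)%Z, (- (Dz 2 w + Dz 3 w))%Z, (- Dz 3 w)%Z)
  /\ ((Dz 1 w + Dz 2 w + Dz 3 w) = 0 \/ (Dz 1 w + Dz 2 w + Dz 3 w) = 1)%Z.
Proof.
  induction w as [|x w [IH1 IH2]]. { split; [reflexivity | now left]. }
  assert (HS : (Dz 1 (x::w) + Dz 2 (x::w) + Dz 3 (x::w) = 1 - (Dz 1 w + Dz 2 w + Dz 3 w))%Z)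
    by (rewrite !Dz_cons; destruct x; cbn [gen_code Nat.eqb]; cbv iota beta; lia).
  rewrite HS. change (f (x :: w)) with (act x (f w)). rewrite IH1. rewrite !(Dz_cons _ x).
  destruct IH2 as [E|E]; rewrite E; split; try lia; destruct x; cbn [gen_code Nat.eqb act]; cbv iota beta;
  f_equal; try f_equal; lia.
Qed.

Lemma triv_cnt w : word_trivial w <->
  (cnt 1 0 w = cnt 1 1 w /\ cnt 2 0 w = cnt 2 1 w /\ cnt 3 0 w = cnt 3 1 w).
Proof.
  rewrite triv_iff. destruct (f_cnt w) as [-> H]. unfold Dz in *. split.
  - intro E. inversion E as [[E1 E2 E3]]. destruct H as [H|H].
    + lia.
    + rewrite H in E1. discriminate.
  - intros (A & B & Cc). rewrite A, B, Cc. rewrite !Z.sub_diag. reflexivity.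
Qed.

Lemma ep0 x xs : eval (Proj 0) (x :: xs) x.
Proof. apply (ev_proj 0 (x :: xs)). simpl; lia. Qed.
Lemma ep1 x y xs : eval (Proj 1) (x :: y :: xs) y.
Proof. apply (ev_proj 1 (x :: y :: xs)). simpl; lia. Qed.
Lemma ep2 x y z xs : eval (Proj 2) (x :: y :: z :: xs) z.
Proof. apply (ev_proj 2 (x :: y :: z :: xs)). simpl; lia. Qed.

Lemma evs1 g xs y : eval g xs y -> evals [g] xs [y].
Proof. intros; repeat constructor; auto. Qed.
Lemma evs2 g1 g2 xs y1 y2 : eval g1 xs y1 -> eval g2 xs y2 -> evals [g1; g2] xs [y1; y2].
Proof. intros; repeat constructor; auto. Qed.

Lemma ecomp1 f g xs y z : eval g xs y -> eval f [y] z -> eval (Comp f [g]) xs z.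
Proof. intros; econstructor; [apply evs1|]; eauto. Qed.
Lemma ecomp2 f g1 g2 xs y1 y2 z : eval g1 xs y1 -> eval g2 xs y2 -> eval f [y1; y2] z ->
  eval (Comp f [g1; g2]) xs z.
Proof. intros; econstructor; [apply evs2|]; eauto. Qed.

Definition cpred := Defs.Prec Defs.Zero (Proj 0).


Lemma e_pred k : eval cpred [k] (Nat.pred k).
Proof.
  assert (H : forall k, exists z, eval cpred [k] z) by
    (intro j; induction j as [|j [z Hz]]; eexists; [apply ev_prec0; apply ev_zero | eapply ev_precS; [exact Hz| apply ep0]]).
  destruct k. apply ev_prec0; apply ev_zero. destruct (H k) as [z Hz]. eapply ev_precS; [exact Hz | apply ep0].
Qed.

Definition csub := Defs.Prec (Proj 0) (Comp cpred [Proj 1]).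
Lemma e_sub k x : eval csub [k; x] (x - k).
Proof.
  induction k. rewrite Nat.sub_0_r. apply ev_prec0. apply ep0.
  eapply ev_precS; [exact IHk|]. eapply ecomp1; [apply ep1|]. replace (x - S k) with (Nat.pred (x - k)) by lia.
  apply e_pred.
Qed.

Definition cadd := Defs.Prec (Proj 0) (Comp Succ [Proj 1]).
Lemma e_add k x : eval cadd [k; x] (k + x).
Proof.
  induction k. apply ev_prec0. apply ep0.
  eapply ev_precS; [exact IHk|]. eapply ecomp1; [apply ep1|]. constructor.
Qed.

Definition cmul := Defs.Prec Defs.Zero (Comp cadd [Proj 2; Proj 1]).
Lemma e_mul k x : eval cmul [k; x] (k * x).
Proof.
  induction k. apply ev_prec0; apply ev_zero.
  eapply ev_precS; [exact IHk|]. eapply ecomp2; [apply ep2|apply ep1|]. apply e_add.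
Qed.

Fixpoint ccst (d : nat) : code := match d with 0 => Defs.Zero | S d => Comp Succ [ccst d] end.
Lemma e_cst d xs : eval (ccst d) xs d.
Proof. induction d; simpl. constructor. eapply ecomp1; [exact IHd|]. constructor. Qed.

Definition cinner := Comp csub [Comp Succ [Comp Succ [Comp Succ [Comp cadd [Proj 0; Comp cadd [Proj 0; Proj 0]]]]]; Proj 1].
Lemma e_inner q m : eval cinner [q; m] (m - (q + (q + q) + 3)).
Proof.
  eapply ecomp2; [| apply ep1 | apply e_sub].
  replace (q + (q + q) + 3) with (S (S (S (q + (q + q))))) by lia.
  eapply ecomp1; [|constructor]. eapply ecomp1; [|constructor]. eapply ecomp1; [|constructor].
  eapply ecomp2; [apply ep0 | | apply e_add]. eapply ecomp2; [apply ep0 | apply ep0 | apply e_add].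
Qed.

Lemma e_inner' q m y : y = m - (q + (q + q) + 3) -> eval cinner [q; m] y.
Proof. intros ->; apply e_inner. Qed.

Definition cdiv := Mu cinner.
Lemma e_div m : eval cdiv [m] ((m - 1) / 3).
Proof.
  pose proof (Nat.div_mod (m - 1) 3 ltac:(lia)). pose proof (Nat.mod_upper_bound (m - 1) 3 ltac:(lia)).
  constructor.
  - apply e_inner'. lia.
  - intros q Hq. exists (m - (q + (q + q) + 3) - 1).
    replace (S (m - (q + (q + q) + 3) - 1)) with (m - (q + (q + q) + 3)) by lia. apply e_inner.
Qed.

Definition dig (m : nat) := m - 3 * ((m - 1) / 3).
Definition cdig := Comp csub [Comp cmul [ccst 3; cdiv]; Proj 0].
Lemma e_dig m : eval cdig [m] (dig m).
Proof.
  eapply ecomp2; [| apply ep0 | apply e_sub]. eapply ecomp2; [apply e_cst | apply e_div | apply e_mul].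
Qed.

Definition Tf (k n : nat) := Nat.iter k (fun m => (m - 1) / 3) n.
Definition cT := Defs.Prec (Proj 0) (Comp cdiv [Proj 1]).
Lemma e_T k n : eval cT [k; n] (Tf k n).
Proof.
  induction k. apply ev_prec0. apply ep0.
  eapply ev_precS; [exact IHk|]. eapply ecomp1; [apply ep1|]. apply e_div.
Qed.

Fixpoint parf (k : nat) : nat := match k with 0 => 0 | S k => 1 - parf k end.
Definition cpar := Defs.Prec Defs.Zero (Comp csub [Proj 1; ccst 1]).
Lemma e_par k : eval cpar [k] (parf k).
Proof.
  induction k. apply ev_prec0; apply ev_zero.
  eapply ev_precS; [exact IHk|]. eapply ecomp2; [apply ep1 | apply e_cst | apply e_sub].
Qed.

Definition eqv (x d : nat) := 1 - ((x - d) + (d - x)).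
Definition ceqc (d : nat) := Comp csub [Comp cadd [Comp csub [ccst d; Proj 0]; Comp csub [Proj 0; ccst d]]; ccst 1].
Lemma e_eqc d x : eval (ceqc d) [x] (eqv x d).
Proof.
  eapply ecomp2; [| apply e_cst | apply e_sub].
  eapply ecomp2; [| | apply e_add]; (eapply ecomp2; [| | apply e_sub]); try apply e_cst; apply ep0.
Qed.

Definition term d p k n := eqv (dig (Tf k n)) d * eqv (parf k) p.
Definition cterm d p := Comp cmul [Comp (ceqc d) [Comp cdig [Comp cT [Proj 0; Proj 1]]];
                                   Comp (ceqc p) [Comp cpar [Proj 0]]].
Lemma e_term d p k n : eval (cterm d p) [k; n] (term d p k n).
Proof.
  eapply ecomp2; [| | apply e_mul].
  - eapply ecomp1; [| apply e_eqc]. eapply ecomp1; [| apply e_dig]. eapply ecomp2; [apply ep0 | apply ep1 | apply e_T].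
  - eapply ecomp1; [| apply e_eqc]. eapply ecomp1; [apply ep0 | apply e_par].
Qed.

Fixpoint sumF (N : nat) (F : nat -> nat) : nat := match N with 0 => 0 | S N => F N + sumF N F end.
Definition csum d p := Defs.Prec Defs.Zero (Comp cadd [Comp (cterm d p) [Proj 0; Proj 2]; Proj 1]).
Lemma e_sum d p N n : eval (csum d p) [N; n] (sumF N (fun k => term d p k n)).
Proof.
  induction N. apply ev_prec0; apply ev_zero.
  eapply ev_precS; [exact IHN|]. eapply ecomp2; [| apply ep1 | apply e_add].
  eapply ecomp2; [apply ep0 | apply ep2 | apply e_term].
Qed.

Definition ccount d p := Comp (csum d p) [Proj 0; Proj 0].
Definition count d p n := sumF n (fun k => term d p k n).
Lemma e_count d p n : eval (ccount d p) [n] (count d p n).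
Proof. eapply ecomp2; [apply ep0 | apply ep0 | apply e_sum]. Qed.

Definition ceq2 d := Comp csub [Comp cadd [Comp csub [ccount d 1; ccount d 0]; Comp csub [ccount d 0; ccount d 1]]; ccst 1].
Lemma e_eq2 d n : eval (ceq2 d) [n] (eqv (count d 0 n) (count d 1 n)).
Proof.
  eapply ecomp2; [| apply e_cst | apply e_sub].
  eapply ecomp2; [| | apply e_add]; (eapply ecomp2; [| | apply e_sub]); apply e_count.
Qed.

Definition cfinal := Comp cmul [ceq2 1; Comp cmul [ceq2 2; ceq2 3]].
Lemma e_final n : eval cfinal [n]
  (eqv (count 1 0 n) (count 1 1 n) * (eqv (count 2 0 n) (count 2 1 n) * eqv (count 3 0 n) (count 3 1 n))).
Proof.
  eapply ecomp2; [apply e_eq2 | | apply e_mul]. eapply ecomp2; [apply e_eq2 | apply e_eq2 | apply e_mul].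
Qed.

Lemma eqv_spec x d : eqv x d = if x =? d then 1 else 0.
Proof. unfold eqv. destruct (Nat.eqb_spec x d); lia. Qed.

Lemma gen_code_range x : 1 <= gen_code x <= 3.
Proof. destruct x; simpl; lia. Qed.

Lemma div_enc w : (enc w - 1) / 3 = enc (tl w).
Proof.
  destruct w as [|x w]. reflexivity. simpl tl. cbn [enc].
  pose proof (gen_code_range x).
  replace (gen_code x + 3 * enc w - 1) with ((gen_code x - 1) + enc w * 3) by lia.
  rewrite Nat.div_add by lia. rewrite Nat.div_small by lia. lia.
Qed.

Lemma Tf_enc k w : Tf k (enc w) = enc (skipn k w).
Proof.
  revert w; induction k; intro w. reflexivity.
  unfold Tf. rewrite Nat.iter_succ_r. fold (Tf k ((enc w - 1) / 3)). rewrite div_enc, IHk.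
  destruct w; simpl; auto. destruct k; reflexivity.
Qed.

Lemma dig_enc w : dig (enc w) = match w with [] => 0 | x :: _ => gen_code x end.
Proof.
  unfold dig. rewrite div_enc. destruct w as [|x w]. reflexivity. simpl tl. cbn [enc]. lia.
Qed.

Lemma parf_le k : parf k <= 1.
Proof. induction k; cbn [parf]; lia. Qed.

Lemma sumF_shift N F : sumF (S N) F = F 0 + sumF N (fun k => F (S k)).
Proof. induction N. simpl. lia. change (sumF (S (S N)) F) with (F (S N) + sumF (S N) F).
  rewrite IHN. simpl. lia. Qed.

Lemma sumF_ext N F G : (forall k, k < N -> F k = G k) -> sumF N F = sumF N G.
Proof. induction N; intro H; simpl. reflexivity. rewrite (H N) by lia. rewrite IHN by (intros; apply H; lia). reflexivity. Qed.

Lemma sumF_cnt d w : 1 <= d -> forall N p, p <= 1 -> length w <= N ->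
  sumF N (fun k => eqv (dig (enc (skipn k w))) d * eqv (parf k) p) = cnt d p w.
Proof.
  intro Hd. induction w as [|x w IH]; intros N p Hp HN.
  - simpl. rewrite (sumF_ext N _ (fun _ => 0)). { clear. induction N; simpl; lia. }
    intros k _. rewrite skipn_nil, (dig_enc []), eqv_spec. destruct (Nat.eqb_spec 0 d); [lia | reflexivity].
  - destruct N as [|N]. simpl in HN; lia. rewrite sumF_shift.
    rewrite (sumF_ext N _ (fun k => eqv (dig (enc (skipn k w))) d * eqv (parf k) (1 - p))).
    + rewrite IH by (simpl in HN; lia). cbn [cnt skipn parf]. rewrite dig_enc, !eqv_spec.
      destruct p as [|[|p]]; try lia; destruct (gen_code x =? d); reflexivity.
    + intros k _. cbn [skipn parf]. rewrite !eqv_spec. pose proof (parf_le k).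
      destruct (Nat.eqb_spec (1 - parf k) p), (Nat.eqb_spec (parf k) (1 - p)); lia.
Qed.

Lemma enc_len w : length w <= enc w.
Proof. induction w; simpl. lia. pose proof (gen_code_range a). lia. Qed.

Lemma count_cnt d p w : 1 <= d -> p <= 1 -> count d p (enc w) = cnt d p w.
Proof.
  intros Hd Hp. unfold count, term. rewrite <- (sumF_cnt d w Hd (enc w) p Hp (enc_len w)).
  apply sumF_ext. intros k _. rewrite Tf_enc. reflexivity.
Qed.

Theorem mainTheorem10 :
  exists c : code, forall w : word,
    (word_trivial w -> eval c [enc w] 1) /\
    (~ word_trivial w -> eval c [enc w] 0).
Proof.
  exists cfinal. intro w. pose proof (e_final (enc w)) as H.
  rewrite !count_cnt in H by lia. rewrite !eqv_spec in H.
  rewrite triv_cnt. split.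
  - intros (A & B & Cc). rewrite A, B, Cc, !Nat.eqb_refl in H. exact H.
  - intro N. destruct (Nat.eqb_spec (cnt 1 0 w) (cnt 1 1 w));
    destruct (Nat.eqb_spec (cnt 2 0 w) (cnt 2 1 w));
    destruct (Nat.eqb_spec (cnt 3 0 w) (cnt 3 1 w)); try tauto; simpl in H; rewrite ?Nat.mul_0_r in H; exact H.
Qed.
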